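(* Consider Algorithm 1 (described in the context) applied to the multistage model, and suppose it does not stop at Step 1. Then for every iteration index $k\ge1$, the iterate $(\boldsymbol x^k,\eta^k,\boldsymbol y^k,u^k)$ is feasible for the multistage model, and $$z^{MS}_{T,R}(\boldsymbol x^*,\eta^*,\boldsymbol y^*,u^* )\le z^{MS}_{T,R}(\boldsymbol x^{k+1},\eta^{k+1},\boldsymbol y^{k+1},u^{k+1})\le z^{MS}_{T,R}(\boldsymbol x^{k},\eta^{k},\boldsymbol y^{k},u^{k}),$$ where $(\boldsymbol x^*,\eta^*,\boldsymbol y^*,u^* )$ is an optimal solution of the multistage model.
   Context: Setting. Integers $T\ge2$, $M,N\ge1$; costs $f_{ti}\ge0$ (vector $\boldsymbol f_t$), $c_{tij}\ge0$ (vector $\boldsymbol c_t\in\mathbb R^{MN}$), capacities $h_{ti}>0$; $(\boldsymbol A_t\boldsymbol y)_j=\sum_iy_{ij}$, $(\boldsymbol B_t\boldsymbol y)_i=\frac1{h_{ti}}\sum_jy_{ij}$. Ceilings and maxima of vectors are componentwise. Scenario tree: finite rooted tree, node set $\mathcal T$, root $1$, all root-to-leaf paths of $T$ nodes; $\mathcal T_t$ nodes at depth $t$, $t_n$ period of $n$, $\mathcal L=\mathcal T_T$, $a(n)$ parent, $\mathcal C(n)$ children, $\mathcal P(n)$ nodes on the root-to-$n$ path (inclusive); probabilities $p_n>0$, $\sum_{n\in\mathcal T_t}p_n=1$, $\sum_{m\in\mathcal C(n)}p_m=p_n$; demands $\boldsymbol d_n\in\mathbb R^N_{\ge0}$. Risk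 parameters $\lambda_t\in[0,1]$, $\alpha_t\in(0,1)$ ($t\ge2$); $\tilde{\boldsymbol f}_n=\boldsymbol f_{t_n}$ if $n=1$ else $(1-\lambda_{t_n})\boldsymbol f_{t_n}$; $\tilde{\boldsymbol c}_n=\boldsymbol c_{t_n}$ if $n=1$ else $(1-\lambda_{t_n})\boldsymbol c_{t_n}$; $\tilde\lambda_n=0$ if $n\in\mathcal L$ else $\lambda_{t_n+1}$; $\tilde\alpha_n=0$ if $n=1$ else $\lambda_{t_n}/(1-\alpha_{t_n})$. Multistage model: minimize $z^{MS}_{T,R}(\boldsymbol x,\eta,\boldsymbol y,u):=\sum_{n\in\mathcal T}p_n\big(\tilde{\boldsymbol f}_n^{\mathsf T}\sum_{m\in\mathcal P(n)}\boldsymbol x_m+\tilde{\boldsymbol c}_n^{\mathsf T}\boldsymbol y_n+\tilde\lambda_n\eta_n+\tilde\alpha_nu_n\big)$ over $\boldsymbol x_n\in\mathbb Z^M_+$, $\boldsymbol y_n\in\mathbb R^{MN}_+$ ($n\in\mathcal T$), $\eta_n\in\mathbb R$ ($n\notin\mathcal L$), $u_n\ge0$ ($n\ne1$), subject to $\boldsymbol A_{t_n}\boldsymbol y_n=\boldsymbol d_n$, $\boldsymbol B_{t_n}\boldsymbol y_n\le\sum_{m\in\mathcal P(n)}\boldsymbol x_m$ ($n\in\mathcal T$), $u_n+\eta_{a(n)}\ge\boldsymbol f_{t_n}^{\mathsf T}\sum_{m\in\mathcal P(n)}\boldsymbol x_m+\boldsymbol c_{t_n}^{\mathsf T}\boldsymbol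 y_n$ ($n\ne1$). Algorithm 1. Step 1: solve the LP relaxation (drop integrality of $\boldsymbol x$) of the multistage model, obtaining an optimal $(\boldsymbol x^{MSLP},\eta^{MSLP},\boldsymbol y^{MSLP},u^{MSLP})$; if all $\boldsymbol x^{MSLP}_n$ are integral, stop and return it. Step 2: set $k=0$ and $(\boldsymbol x^0,\eta^0,\boldsymbol y^0,u^0)=(\boldsymbol x^{MSLP},\eta^{MSLP},\boldsymbol y^{MSLP},u^{MSLP})$. Repeat until successive iterates differ by less than a tolerance $\epsilon$: (a) set $\boldsymbol x^{k+1}_1=\lceil\boldsymbol B_{t_1}\boldsymbol y^k_1\rceil$, $\boldsymbol x^{k+1}_n=\max_{m\in\mathcal P(n)}\lceil\boldsymbol B_{t_m}\boldsymbol y^k_m\rceil-\max_{m\in\mathcal P(a(n))}\lceil\boldsymbol B_{t_m}\boldsymbol y^k_m\rceil$ ($n\ne1$), $\eta^{k+1}_n=\max_{m\in\mathcal C(n)}\{\boldsymbol f_{t_m}^{\mathsf T}\sum_{l\in\mathcal P(m)}\boldsymbol x^{k+1}_l+\boldsymbol c_{t_m}^{\mathsf T}\boldsymbol y^k_m-u^k_m\}$ ($n\notin\mathcal L$) (this is an optimal solution of the multistage model in the variables $(\boldsymbol x,\eta)$ with $(\boldsymbol y,u)=(\boldsymbol y^k,u^k)$ fixed); (b) for each $n\ne1$ independently, let $(\boldsymbol y^{k+1}_n,u^{k+1}_n)$ be an optimal solution of $\min\tilde{\boldsymbol c}_n^{\mathsf T}\boldsymbol y_n+\tilde\alpha_nu_n$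 s.t. $\boldsymbol B_{t_n}\boldsymbol y_n\le\sum_{m\in\mathcal P(n)}\boldsymbol x^{k+1}_m$, $\boldsymbol A_{t_n}\boldsymbol y_n=\boldsymbol d_n$, $u_n-\boldsymbol c_{t_n}^{\mathsf T}\boldsymbol y_n\ge\boldsymbol f_{t_n}^{\mathsf T}\sum_{m\in\mathcal P(n)}\boldsymbol x^{k+1}_m-\eta^{k+1}_{a(n)}$, $\boldsymbol y_n\ge0$, $u_n\ge0$; for $n=1$ solve the same problem without $u_1$ and the last constraint; (c) $k\leftarrow k+1$. Return the final iterate, denoted $(\boldsymbol x^H,\eta^H,\boldsymbol y^H,u^H)$. *)

(* Defs.v *)
From HB Require Import structures.
From mathcomp Require Import all_boot all_order all_algebra.
From mathcomp Require Import reals.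
Set Implicit Arguments. Unset Strict Implicit. Unset Printing Implicit Defensive.
Import Order.TTheory GRing.Theory Num.Theory.
Local Open Scope ring_scope.

(* Nodes are the elements of a finite type V; facilities i : 'I_M,           *)
(* customers j : 'I_N; periods t are natural numbers 1..T.                   *)
Record data (R : realType) (V : finType) (M N : nat) := Data {
  T     : nat;
  root  : V;
  par   : V -> V;                       (* a(n), meaningful for n <> root *)
  per   : V -> nat;
  prob  : V -> R;
  dem   : V -> 'I_N -> R;
  fcost : nat -> 'I_M -> R;
  ccost : nat -> 'I_M -> 'I_N -> R;
  cap   : nat -> 'I_M -> R;
  lam   : nat -> R;
  alp   : nat -> R
}.

Section Model.
Variables (R : realType) (V : finType) (M N : nat) (D : data R V M N).

Local Notation T := (T D).
Local Notation root := (root D).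
Local Notation par := (par D).
Local Notation per := (per D).

Definition children (n : V) : {set V} := [set m | (m != root) && (par m == n)].

Definition path_nodes (n : V) : {set V} :=
  [set m | [exists k : 'I_(per n), iter k par n == m]].

Definition is_leaf (n : V) : bool := per n == T.

(* The scenario tree axioms: a finite rooted tree with root 1 (period 1), each
   non-root node one period after its parent, all nodes in periods 1..T and
   every node of period < T having a child (so all root-to-leaf paths have
   exactly T nodes); probabilities and demands as in the paper. *)
Definition scenario_tree : Prop :=
  [/\ per root = 1%N,
      (forall n, n != root -> per n = (per (par n)).+1),
      (forall n, (1 <= per n <= T)%N),
      (forall n, (per n < T)%N -> exists m, m \in children n) &
      (forall n, (per n = 1)%N -> n = root)].

Definition probabilities_ok : Prop :=
  [/\ (forall n, 0 < prob D n),
      (forall t, (1 <= t <= T)%N -> \sum_(n | per n == t) prob D n = 1) &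
      (forall n, ~~ is_leaf n -> \sum_(m in children n) prob D m = prob D n)].

Definition data_ok : Prop :=
  [/\ (2 <= T)%N, (1 <= M)%N, (1 <= N)%N, scenario_tree & probabilities_ok] /\
  [/\ (forall n j, 0 <= dem D n j),
      (forall t i, (1 <= t <= T)%N -> 0 <= fcost D t i),
      (forall t i j, (1 <= t <= T)%N -> 0 <= ccost D t i j),
      (forall t i, (1 <= t <= T)%N -> 0 < cap D t i) &
      (forall t, (2 <= t <= T)%N -> 0 <= lam D t <= 1 /\ 0 < alp D t < 1)].

Definition ftil (n : V) (i : 'I_M) : R :=
  if n == root then fcost D (per n) i else (1 - lam D (per n)) * fcost D (per n) i.
Definition ctil (n : V) (i : 'I_M) (j : 'I_N) : R :=
  if n == root then ccost D (per n) i j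
  else (1 - lam D (per n)) * ccost D (per n) i j.
Definition lamtil (n : V) : R := if is_leaf n then 0 else lam D (per n).+1.
Definition alptil (n : V) : R :=
  if n == root then 0 else lam D (per n) / (1 - alp D (per n)).

(* A candidate solution (x, eta, y, u).  eta_n is only meaningful for non-leaf
   n and u_n only for n <> root; the other components occur neither in the
   objective (their coefficients vanish) nor in the constraints. *)
Record sol := Sol {
  sx   : V -> 'I_M -> R;
  seta : V -> R;
  sy   : V -> 'I_M -> 'I_N -> R;
  su   : V -> R
}.

Definition Aop (y : 'I_M -> 'I_N -> R) (j : 'I_N) : R := \sum_i y i j.
Definition Bop (t : nat) (y : 'I_M -> 'I_N -> R) (i : 'I_M) : R :=
  (cap D t i)^-1 * \sum_j y i j.

Definition cumx (x : V -> 'I_M -> R) (n : V) (i : 'I_M) : R :=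
  \sum_(m in path_nodes n) x m i.

Definition stage_cost (x : V -> 'I_M -> R) (y : V -> 'I_M -> 'I_N -> R) (n : V) : R :=
  \sum_i fcost D (per n) i * cumx x n i + \sum_i \sum_j ccost D (per n) i j * y n i j.

Definition zMS (s : sol) : R :=
  \sum_n prob D n *
    ( \sum_i ftil n i * cumx (sx s) n i
    + \sum_i \sum_j ctil n i j * sy s n i j
    + lamtil n * seta s n + alptil n * su s n ).

Definition feasible_LP (s : sol) : Prop :=
  [/\ (forall n i, 0 <= sx s n i),
      (forall n i j, 0 <= sy s n i j),
      (forall n, n != root -> 0 <= su s n),
      (forall n j, Aop (sy s n) j = dem D n j) /\
      (forall n i, Bop (per n) (sy s n) i <= cumx (sx s) n i) &
      (forall n, n != root ->
         stage_cost (sx s) (sy s) n <= su s n + seta s (par n))].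

Definition feasible_MS (s : sol) : Prop :=
  feasible_LP s /\ (forall n i, sx s n i \is a Num.int).

Definition optimal_MS (s : sol) : Prop :=
  feasible_MS s /\ forall s', feasible_MS s' -> zMS s <= zMS s'.

Definition optimal_LP (s : sol) : Prop :=
  feasible_LP s /\ forall s', feasible_LP s' -> zMS s <= zMS s'.

Definition is_max_over (A : {set V}) (g : V -> R) (v : R) : Prop :=
  (exists2 m, m \in A & v = g m) /\ (forall m, m \in A -> g m <= v).

Definition ceilB (y : V -> 'I_M -> 'I_N -> R) (m : V) (i : 'I_M) : R :=
  (Num.ceil (Bop (per m) (y m) i))%:~R.

(* max_{m in P(n)} ceil(B_{t_m} y_m)_i  (P(n) contains n) *)
Definition pathmax (y : V -> 'I_M -> 'I_N -> R) (n : V) (i : 'I_M) : R :=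
  \big[Num.max/ceilB y n i]_(m in path_nodes n) ceilB y m i.

(* Step 2(a): the rounding of x and the update of eta *)
Definition step_x (y : V -> 'I_M -> 'I_N -> R) (n : V) (i : 'I_M) : R :=
  if n == root then ceilB y root i else pathmax y n i - pathmax y (par n) i.

Definition step_eta_ok (x : V -> 'I_M -> R) (s : sol) (eta : V -> R) : Prop :=
  forall n, ~~ is_leaf n ->
    is_max_over (children n) (fun m => stage_cost x (sy s) m - su s m) (eta n).

(* Step 2(b): the nodewise subproblems with (x, eta) fixed *)
Definition sub_feasible (x : V -> 'I_M -> R) (eta : V -> R) (n : V)
    (yn : 'I_M -> 'I_N -> R) (un : R) : Prop :=
  [/\ (forall i, Bop (per n) yn i <= cumx x n i),
      (forall j, Aop yn j = dem D n j),
      (forall i j, 0 <= yn i j) &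
      (n != root ->
        0 <= un /\
        un - \sum_i \sum_j ccost D (per n) i j * yn i j
          >= \sum_i fcost D (per n) i * cumx x n i - eta (par n))].

Definition sub_obj (n : V) (yn : 'I_M -> 'I_N -> R) (un : R) : R :=
  \sum_i \sum_j ctil n i j * yn i j + (if n == root then 0 else alptil n * un).

Definition sub_optimal (x : V -> 'I_M -> R) (eta : V -> R) (n : V)
    (yn : 'I_M -> 'I_N -> R) (un : R) : Prop :=
  sub_feasible x eta n yn un /\
  forall yn' un', sub_feasible x eta n yn' un' -> sub_obj n yn un <= sub_obj n yn' un'.

Definition alg_step (s s' : sol) : Prop :=
  [/\ (forall n i, sx s' n i = step_x (sy s) n i),
      step_eta_ok (sx s') s (seta s') &
      (forall n, sub_optimal (sx s') (seta s') n (sy s' n) (su s' n))].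

End Model.

(* Main.v *)
Require Import Defs.
From HB Require Import structures.
From mathcomp Require Import all_boot all_order all_algebra.
From mathcomp Require Import reals.
From mathcomp Require Import lra zify.
Import Order.TTheory GRing.Theory Num.Theory.
Local Open Scope ring_scope.

Section Proof.
Variables (R : realType) (V : finType) (M N : nat) (D : data R V M N).
Hypothesis HD : data_ok D.

Local Notation rt := (Defs.root D).
Local Notation par := (par D).
Local Notation per := (per D).

Lemma per_b n : (1 <= per n <= T D)%N.
Proof. by case: HD => [[_ _ _ [_ _ H _ _] _] _]. Qed.

Lemma per_root : per rt = 1%N.
Proof. by case: HD => [[_ _ _ [H _ _ _ _] _] _]. Qed.

Lemma per_par {n} : n != rt -> per n = (per (par n)).+1.
Proof. by case: HD => [[_ _ _ [_ H _ _ _] _] _]; exact: H. Qed.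

Lemma per1 n : per n = 1%N -> n = rt.
Proof. by case: HD => [[_ _ _ [_ _ _ _ H] _] _]; exact: H. Qed.

Lemma per_ge2 {n} : n != rt -> (2 <= per n)%N.
Proof. move=> /per_par ->; have := per_b (par n); lia. Qed.

Lemma per_ind (P : V -> Prop) : P rt ->
  (forall n, n != rt -> P (par n) -> P n) -> forall n, P n.
Proof.
move=> Hr Hs.
suff: forall p n, per n = p -> P n by move=> H n; exact: (H _ n erefl).
elim=> [|p IH] n Hn; first by have := per_b n; rewrite Hn.
have [->|nr] := eqVneq n rt; first by [].
apply: (Hs n nr); apply: IH; have := per_par nr; lia.
Qed.

Lemma path_root : path_nodes D rt = [set rt].
Proof.
apply/setP => m; rewrite !inE; apply/existsP/idP.
  case=> [[k hk]] /=; rewrite per_root in hk.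
  by case: k hk => // _ /eqP <-.
move=> /eqP ->; have h : (0 < per rt)%N by rewrite per_root.
by exists (Ordinal h).
Qed.

Lemma path_rec n : n != rt -> path_nodes D n = n |: path_nodes D (par n).
Proof.
move=> nr; have hp := per_par nr.
apply/setP => m; rewrite !inE; apply/existsP/idP.
  case=> [[[|k] hk]] /= /eqP <-; first by rewrite eqxx.
  apply/orP; right; apply/existsP.
  have hk' : (k < per (par n))%N by rewrite hp in hk.
  by exists (Ordinal hk'); rewrite -iterSr.
case/orP=> [/eqP ->|/existsP [[k hk] /= /eqP <-]].
  have h : (0 < per n)%N by rewrite hp.
  by exists (Ordinal h).
have h : (k.+1 < per n)%N by rewrite hp.
by exists (Ordinal h); rewrite -iterSr.
Qed.

Lemma path_self n : n \in path_nodes D n.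
Proof.
have [->|nr] := eqVneq n rt; first by rewrite path_root inE.
by rewrite path_rec // setU11.
Qed.

Lemma path_per n m : m \in path_nodes D n -> (per m <= per n)%N.
Proof.
elim/per_ind: n m => [|n nr IH] m; first by rewrite path_root inE => /eqP ->.
rewrite path_rec // in_setU1 => /orP [/eqP -> //|/IH]; rewrite (per_par nr); lia.
Qed.

Lemma par_notin {n} : n != rt -> n \notin path_nodes D (par n).
Proof.
move=> nr; apply/negP => /path_per; rewrite (per_par nr); lia.
Qed.

Lemma par_in {n} : n != rt -> par n \in path_nodes D n.
Proof. by move=> nr; rewrite path_rec // in_setU1 path_self orbT. Qed.

Lemma cumx_root x i : cumx D x rt i = x rt i.
Proof. by rewrite /cumx path_root big_set1. Qed.

Lemma cumx_rec x n i : n != rt -> cumx D x n i = x n i + cumx D x (par n) i.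
Proof. by move=> nr; rewrite /cumx path_rec // big_setU1 //= par_notin. Qed.

Lemma par_nonleaf {n} : n != rt -> ~~ is_leaf D (par n).
Proof.
move=> nr; rewrite /is_leaf; have := per_b n; rewrite (per_par nr).
by move=> h; apply/eqP; lia.
Qed.

Lemma child_par {n} : n != rt -> n \in children D (par n).
Proof. by move=> nr; rewrite inE nr eqxx. Qed.


Lemma bigmax_ub (I : finType) (A : {set I}) (F : I -> R) x c :
  x <= c -> (forall m, m \in A -> F m <= c) -> \big[Num.max/x]_(m in A) F m <= c.
Proof.
move=> hx hF; apply: (big_rec (fun v => v <= c)) => // i v Hi Hv.
by rewrite ge_max Hv andbT hF.
Qed.

Lemma bigmax_idx (I : finType) (A : {set I}) (F : I -> R) x :
  x <= \big[Num.max/x]_(m in A) F m.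
Proof.
apply: (big_rec (fun v => x <= v)) => // i v Hi Hv.
by rewrite le_max Hv orbT.
Qed.

Lemma bigmax_mem (I : finType) (A : {set I}) (F : I -> R) x m :
  m \in A -> F m <= \big[Num.max/x]_(j in A) F j.
Proof.
move=> hm; have : m \in index_enum I by rewrite mem_index_enum.
elim: (index_enum I) => // a r IH; rewrite in_cons big_cons.
case/orP=> [/eqP <-|/IH h]; first by rewrite hm le_max lexx.
by case: (a \in A) => //; rewrite le_max h orbT.
Qed.

Lemma ceilB_int y m i : ceilB D y m i \is a Num.int.
Proof. exact: intr_int. Qed.

Lemma pathmax_int y n i : pathmax D y n i \is a Num.int.
Proof.
apply: (big_rec (fun v => v \is a Num.int)) => [|j v _ hv]; first exact: ceilB_int.
by rewrite maxEle; case: ifP => _ //; exact: ceilB_int.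
Qed.

Lemma ceilB_le_pathmax y n m i : m \in path_nodes D n -> ceilB D y m i <= pathmax D y n i.
Proof. exact: bigmax_mem. Qed.

Lemma path_trans n m l : m \in path_nodes D n -> l \in path_nodes D m -> l \in path_nodes D n.
Proof.
elim/per_ind: n m l => [|n nr IH] m l.
  by rewrite {1}path_root inE => /eqP ->.
rewrite {1}path_rec // in_setU1 => /orP [/eqP -> //|hm hl].
by rewrite path_rec // in_setU1; apply/orP; right; exact: IH hm hl.
Qed.

Lemma pathmax_par y n i : n != rt -> pathmax D y (par n) i <= pathmax D y n i.
Proof.
move=> nr; apply: bigmax_ub; first exact/ceilB_le_pathmax/par_in.
by move=> m hm; apply: ceilB_le_pathmax; apply: path_trans hm; exact: par_in.
Qed.

Lemma pathmax_root y i : pathmax D y rt i = ceilB D y rt i.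
Proof.
apply/le_anti; rewrite bigmax_idx andbT; apply: bigmax_ub => // m.
by rewrite path_root inE => /eqP ->.
Qed.

Lemma cumx_step y n i : cumx D (step_x D y) n i = pathmax D y n i.
Proof.
elim/per_ind: n => [|n nr IH].
  by rewrite cumx_root /step_x eqxx pathmax_root.
by rewrite cumx_rec // IH /step_x (negbTE nr) subrK.
Qed.

Lemma cumx_mono x n m i : (forall n i, 0 <= x n i) ->
  m \in path_nodes D n -> cumx D x m i <= cumx D x n i.
Proof.
move=> hx; elim/per_ind: n m => [|n nr IH] m.
  by rewrite path_root inE => /eqP ->.
rewrite path_rec // in_setU1 => /orP [/eqP -> //|/IH h].
rewrite [cumx D x n i]cumx_rec //; apply: (le_trans h).
by rewrite lerDr hx.
Qed.

Lemma cumx_int x n i : (forall n i, x n i \is a Num.int) -> cumx D x n i \is a Num.int.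
Proof. by move=> h; apply: rpred_sum => m _; exact: h. Qed.

Lemma ceil_le_intR (a z : R) : z \is a Num.int -> a <= z -> (Num.ceil a)%:~R <= z.
Proof.
by case/intrP=> q -> h; rewrite ler_int ceil_le_int.
Qed.

Lemma Bop_ge0 n y i : (forall i j, 0 <= y i j) -> 0 <= Bop D (per n) y i.
Proof.
move=> hy; rewrite /Bop; apply: mulr_ge0; last by apply: sumr_ge0 => j _; exact: hy.
by rewrite invr_ge0; case: HD => _ [_ _ _ h _]; apply/ltW/h/per_b.
Qed.

Lemma pathmax_le_cumx x y n i :
  (forall n i, 0 <= x n i) -> (forall n i, x n i \is a Num.int) ->
  (forall n i, Bop D (per n) (y n) i <= cumx D x n i) ->
  pathmax D y n i <= cumx D x n i.
Proof.
move=> hx hi hB.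
have H : forall m, m \in path_nodes D n -> ceilB D y m i <= cumx D x n i.
  move=> m hm; apply: le_trans (cumx_mono x n m i hx hm).
  by apply: ceil_le_intR; [exact: cumx_int|exact: hB].
by apply: bigmax_ub => //; apply: H; exact: path_self.
Qed.

Lemma f_ge0 n i : 0 <= fcost D (per n) i.
Proof. by case: HD => _ [_ h _ _ _]; apply/h/per_b. Qed.

Lemma c_ge0 n i j : 0 <= ccost D (per n) i j.
Proof. by case: HD => _ [_ _ h _ _]; apply/h/per_b. Qed.

Lemma lam_b {n} : n != rt -> 0 <= lam D (per n) <= 1.
Proof.
move=> nr; case: HD => _ [_ _ _ _ h]; apply: (proj1 (h _ _)).
by rewrite per_ge2 //= (andP (per_b n)).2.
Qed.

Lemma ftil_ge0 n i : 0 <= ftil D n i.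
Proof.
rewrite /ftil; case: eqP => [_|/eqP nr]; first exact: f_ge0.
apply: mulr_ge0; last exact: f_ge0.
by have /andP[_ h] := lam_b nr; rewrite subr_ge0.
Qed.

Lemma lamtil_ge0 n : 0 <= lamtil D n.
Proof.
rewrite /lamtil; case: ifP => // hl.
case: HD => _ [_ _ _ _ h]; have := per_b n; move: hl; rewrite /is_leaf => /negbT hl hb.
have [/andP [h1 _] _] : 0 <= lam D (per n).+1 <= 1 /\ 0 < alp D (per n).+1 < 1.
  by apply: h; apply/andP; split; [lia| move: hl hb => /eqP; lia].
exact: h1.
Qed.

Definition xpart (x : V -> 'I_M -> R) (eta : V -> R) n :=
  \sum_i ftil D n i * cumx D x n i + lamtil D n * eta n.

Lemma zMS_split (s : sol R V M N) :
  zMS D s = \sum_n prob D n * (xpart (sx s) (seta s) n + sub_obj D n (sy s n) (su s n)).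
Proof.
apply: eq_bigr => n _; congr (_ * _); rewrite /xpart /sub_obj /alptil.
by case: eqP => _; rewrite ?mul0r ?addr0; lra.
Qed.

Lemma stage_cost_mono x x' y m :
  (forall i, cumx D x' m i <= cumx D x m i) -> stage_cost D x' y m <= stage_cost D x y m.
Proof.
move=> h; rewrite /stage_cost lerD2r; apply: ler_sum => i _.
by apply: ler_wpM2l; [exact: f_ge0|exact: h].
Qed.

Lemma step_feasible (s s' : sol R V M N) :
  (forall n i j, 0 <= sy s n i j) -> alg_step D s s' -> feasible_MS D s'.
Proof.
move=> hy [hx he hsub]; split; last first.
  move=> n i; rewrite hx /step_x; case: ifP => _; first exact: ceilB_int.
  by apply: rpredB; exact: pathmax_int.
split.
- move=> n i; rewrite hx /step_x; case: ifP => [_|/negbT nr].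
    rewrite /ceilB ler0z ceil_ge0; have := Bop_ge0 rt (sy s rt) i (hy rt); lra.
  by rewrite subr_ge0 pathmax_par.
- by move=> n i j; have [[_ _ h _] _] := hsub n; exact: h.
- by move=> n nr; have [[_ _ _ h] _] := hsub n; case: (h nr).
- split=> n; have [[h1 h2 _ _] _] := hsub n; [exact: h2|exact: h1].
- move=> n nr; have [[_ _ _ h] _] := hsub n; case: (h nr) => _.
  by rewrite /stage_cost; lra.
Qed.

Lemma old_sub_feasible (s s' : sol R V M N) :
  feasible_MS D s -> alg_step D s s' ->
  forall n, sub_feasible D (sx s') (seta s') n (sy s n) (su s n).
Proof.
move=> [[hx hy hu [hA hB] hc] hi] [hx' he hsub] n.
have hcum : forall n i, cumx D (sx s') n i = pathmax D (sy s) n i.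
  by move=> m i; rewrite -(cumx_step (sy s)); apply: eq_bigr => l _; exact: hx'.
split.
- move=> i; rewrite hcum; apply: le_trans (ceilB_le_pathmax (sy s) n n i (path_self n)).
  exact: ceil_ge.
- exact: hA.
- exact: hy.
- move=> nr; split; first exact: hu.
  have [_ hmax] := he (par n) (par_nonleaf nr).
  have := hmax n (child_par nr); rewrite /stage_cost; lra.
Qed.

Lemma descent (s s' : sol R V M N) :
  feasible_MS D s -> alg_step D s s' -> zMS D s' <= zMS D s.
Proof.
move=> hf hst; have hsf := @old_sub_feasible s s' hf hst.
case: hf => [[hx hy hu [hA hB] hc] hi]; case: hst => [hx' he hsub].
have hcum : forall n i, cumx D (sx s') n i = pathmax D (sy s) n i.
  by move=> m i; rewrite -(cumx_step (sy s)); apply: eq_bigr => l _; exact: hx'.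
have hle : forall n i, cumx D (sx s') n i <= cumx D (sx s) n i.
  by move=> n i; rewrite hcum; apply: pathmax_le_cumx.
rewrite !zMS_split; apply: ler_sum => n _.
have hp : 0 <= prob D n.
  by case: HD => [[_ _ _ _ [h _ _]] _]; exact/ltW/h.
apply: ler_wpM2l => //; apply: lerD.
  rewrite /xpart; apply: lerD.
    by apply: ler_sum => i _; apply: ler_wpM2l; [exact: ftil_ge0|exact: hle].
  rewrite /lamtil; case: ifP => [_|hl]; first by rewrite !mul0r.
  apply: ler_wpM2l; first by have := lamtil_ge0 n; rewrite /lamtil hl.
  have [[m hm ->] _] := he n (negbT hl).
  move: hm; rewrite inE => /andP [mr /eqP hpm].
  have := hc m mr; rewrite hpm => h1.
  have := stage_cost_mono (sx s) (sx s') (sy s) m (hle m); lra.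
by have [_ h] := hsub n; apply: h; exact: hsf.
Qed.

End Proof.

Theorem proposition3 (R : realType) (V : finType) (M N : nat)
    (D : data R V M N) (HD : data_ok D)
    (xstar : sol R V M N) (Hstar : optimal_MS D xstar)
    (K : nat) (it : nat -> sol R V M N)
    (H0 : optimal_LP D (it 0%N))
    (Hnostop : ~ (forall n i, sx (it 0%N) n i \is a Num.int))
    (Hstep : forall k, (k < K)%N -> alg_step D (it k) (it k.+1)) :
  forall k, (1 <= k)%N ->
    ((k <= K)%N -> feasible_MS D (it k)) /\
    ((k < K)%N -> zMS D xstar <= zMS D (it k.+1) /\ zMS D (it k.+1) <= zMS D (it k)).
Proof.
move=> k hk.
have yge0 : forall j, (j <= K)%N -> forall n i l, 0 <= sy (it j) n i l.
  case=> [_|j hj]; first by case: H0 => [[_ h _ _ _] _].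
  have [_ _ hsub] := Hstep j hj; move=> n i l.
  by have [[_ _ h _] _] := hsub n; exact: h.
have feas : forall k, (1 <= k)%N -> (k <= K)%N -> feasible_MS D (it k).
  case=> // j _ hj.
  exact: (@step_feasible _ _ _ _ _ HD _ _ (yge0 j (ltnW hj)) (Hstep j hj)).
split; first exact: feas.
move=> hkK; split.
  by apply: (proj2 Hstar); apply: feas.
exact: (@descent _ _ _ _ _ HD _ _ (feas k hk (ltnW hkK)) (Hstep k hkK)).
Qed.
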